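(* Let $(E;\oplus,0)$ be a generalized effect algebra. If $E$ is monotone Dedekind upwards $\sigma$-complete, then $E$ is monotone Dedekind downwards $\sigma$-complete. If $E$ is upwards directed, then $E$ is monotone Dedekind upwards $\sigma$-complete if and only if $E$ is monotone Dedekind downwards $\sigma$-complete.
   Context: A generalized effect algebra is a structure $(E;\oplus,0)$ with $0\in E$ and a partial binary operation $\oplus$ such that for all $x,y,z\in E$: $x\oplus y=y\oplus x$ if one side is defined; $(x\oplus y)\oplus z=x\oplus(y\oplus z)$ if one side is defined; $x\oplus0=x$; $x\oplus y=x\oplus z$ implies $y=z$; $x\oplus y=0$ implies $x=y=0$. The induced partial order is $x\le y$ iff $x\oplus z=y$ for some $z\in E$. $E$ is monotone Dedekind upwards $\sigma$-complete if every sequence $x_1\le x_2\le\cdots$ that has an upper bound in $E$ has a supremum $\bigvee_n x_n$ in $E$; monotone Dedekind downwards $\sigma$-complete if every sequence $x_1\ge x_2\ge\cdots$ has an infimum $\bigwedge_n x_n$ in $E$; upwards directed if any two elements of $E$ have a common upper bound in $E$. *)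

(* Defs.v *)
(* Generalized effect algebras with a partial operation
   encoded as  op : E -> E -> option E  (None = undefined). *)

Section GEA.
Context {E : Type} (op : E -> E -> option E) (zero : E).


Definition is_GEA : Prop :=
  (forall x y, op x y = op y x) /\
  (forall x y z xy s, op x y = Some xy -> op xy z = Some s ->
       exists yz, op y z = Some yz /\ op x yz = Some s) /\
  (forall x y z yz s, op y z = Some yz -> op x yz = Some s ->
       exists xy, op x y = Some xy /\ op xy z = Some s) /\
  (forall x, op x zero = Some x) /\
  (forall x y z s, op x y = Some s -> op x z = Some s -> y = z) /\
  (forall x y, op x y = Some zero -> x = zero /\ y = zero).

Definition gle (x y : E) : Prop := exists z, op x z = Some y.

Definition is_upper_bound (s : nat -> E) (b : E) : Prop :=
  forall n, gle (s n) b.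
Definition is_lower_bound (s : nat -> E) (b : E) : Prop :=
  forall n, gle b (s n).

Definition is_sup (s : nat -> E) (a : E) : Prop :=
  is_upper_bound s a /\ forall b, is_upper_bound s b -> gle a b.
Definition is_inf (s : nat -> E) (a : E) : Prop :=
  is_lower_bound s a /\ forall b, is_lower_bound s b -> gle b a.

Definition mono_dedekind_up_sigma : Prop :=
  forall s : nat -> E, (forall n, gle (s n) (s (S n))) ->
    (exists b, is_upper_bound s b) -> exists a, is_sup s a.

Definition mono_dedekind_down_sigma : Prop :=
  forall s : nat -> E, (forall n, gle (s (S n)) (s n)) ->
    exists a, is_inf s a.

Definition upwards_directed : Prop :=
  forall x y, exists z, gle x z /\ gle y z.

End GEA.

(* Main.v *)
Require Import Defs.
From Stdlib Require Import ClassicalEpsilon.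

Section H.
Context (E : Type) (op : E -> E -> option E) (zero : E) (HE : is_GEA op zero).

Lemma comm x y : op x y = op y x.
Proof. destruct HE as [h _]; apply h. Qed.

Lemma key x f y p w q : op x f = Some y -> op y p = Some w -> op x q = Some w ->
  op f p = Some q.
Proof.
  destruct HE as [_ [A1 [_ [_ [C _]]]]]. intros h1 h2 h3.
  destruct (A1 _ _ _ _ _ h1 h2) as [k [hk1 hk2]].
  rewrite (C _ _ _ _ h3 hk2). exact hk1.
Qed.

Lemma gtrans x y z : gle op x y -> gle op y z -> gle op x z.
Proof.
  destruct HE as [_ [A1 _]]. intros [a ha] [b hb].
  destruct (A1 _ _ _ _ _ ha hb) as [k [_ hk]]. exists k; exact hk.
Qed.

Lemma up_to_down : mono_dedekind_up_sigma op -> mono_dedekind_down_sigma op.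
Proof.
  intros Up s Hs.
  assert (H0 : forall n, gle op (s n) (s 0)).
  { induction n. - exists zero. destruct HE as [_ [_ [_ [N _]]]]. apply N.
    - eapply gtrans; eauto. }
  set (d := fun n => proj1_sig (constructive_indefinite_description _ (H0 n))).
  assert (Hd : forall n, op (s n) (d n) = Some (s 0)).
  { intro n. unfold d. destruct (constructive_indefinite_description _ _); auto. }
  destruct (Up d) as [dd [Hub Hl]].
  - intro n. destruct (Hs n) as [f hf]. exists f. rewrite comm.
    eapply key; eauto.
  - exists (s 0). intro n. exists (s n). rewrite comm. apply Hd.
  - assert (Hu : is_upper_bound op d (s 0)).
    { intro n. exists (s n). rewrite comm. apply Hd. }
    destruct (Hl _ Hu) as [a ha]. exists a. split.
    + intro n. destruct (Hub n) as [e he]. exists e. rewrite comm.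
      eapply key; eauto. rewrite comm; apply Hd.
    + intros b Hb. destruct (Hb 0) as [c hc].
      assert (Hcu : is_upper_bound op d c).
      { intro n. destruct (Hb n) as [f hf]. exists f. rewrite comm.
        eapply key; eauto. }
      destruct (Hl _ Hcu) as [g hg]. exists g. rewrite comm.
      eapply key; eauto. rewrite comm; exact hc.
Qed.

Lemma loc (Down : mono_dedekind_down_sigma op) s
  (Hs : forall n, gle op (s n) (s (S n))) w (Hw : is_upper_bound op s w) :
  exists a, is_upper_bound op s a /\
    forall c, is_upper_bound op s c -> gle op c w -> gle op a c.
Proof.
  set (t := fun n => proj1_sig (constructive_indefinite_description _ (Hw n))).
  assert (Ht : forall n, op (s n) (t n) = Some w).
  { intro n. unfold t. destruct (constructive_indefinite_description _ _); auto. }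
  destruct (Down t) as [tt [Hlb Hg]].
  - intro n. destruct (Hs n) as [f hf]. exists f. rewrite comm.
    eapply key; eauto.
  - assert (Htw : gle op tt w).
    { eapply gtrans. apply (Hlb 0). exists (s 0). rewrite comm; apply Ht. }
    destruct Htw as [a ha]. exists a. split.
    + intro n. destruct (Hlb n) as [e he]. exists e. rewrite comm.
      eapply key; eauto. rewrite comm; apply Ht.
    + intros c Hc [u hu].
      assert (Hul : is_lower_bound op t u).
      { intro n. destruct (Hc n) as [f hf]. exists f. rewrite comm.
        eapply key; eauto. }
      destruct (Hg _ Hul) as [g hg]. exists g. rewrite comm.
      eapply key; eauto. rewrite comm; exact hu.
Qed.

Lemma down_to_up : upwards_directed op -> mono_dedekind_down_sigma op ->
  mono_dedekind_up_sigma op.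
Proof.
  intros Dir Down s Hs [b0 Hb0].
  destruct (loc Down s Hs b0 Hb0) as [a [Ha Hamin]].
  exists a. split; [exact Ha|]. intros c Hc.
  destruct (Dir b0 c) as [z [Hbz Hcz]].
  assert (Hz : is_upper_bound op s z) by (intro n; eapply gtrans; [apply Hb0|exact Hbz]).
  destruct (loc Down s Hs z Hz) as [a' [Ha' Ha'min]].
  eapply gtrans. apply Hamin. exact Ha'. apply Ha'min; auto.
  apply Ha'min; auto.
Qed.

End H.

Theorem lemma5p1 (E : Type) (op : E -> E -> option E) (zero : E)
  (HE : is_GEA op zero) :
  (mono_dedekind_up_sigma op -> mono_dedekind_down_sigma op) /\
  (upwards_directed op ->
     (mono_dedekind_up_sigma op <-> mono_dedekind_down_sigma op)).
Proof.
  split. - apply (up_to_down _ _ _ HE).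
  - intro D. split. apply (up_to_down _ _ _ HE). apply (down_to_up _ _ _ HE D).
Qed.
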